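(* For every positive integer $n$, $$\sum_{\mathbf a\in\mathsf{PF}_n} t^{\operatorname{run}(\mathbf a)}=\sum_{\mathbf a\in\mathsf{RW}_n} t^{\operatorname{run}(\mathbf a)}.$$
   Context: Let $[n]=\{1,\dots,n\}$ and $\mathbf a=(a_1,\dots,a_n)\in[n]^n$. If $1\in\{a_1,\dots,a_n\}$, $\operatorname{run}(\mathbf a)=\max\{i\in[n]:[i]\subseteq\{a_1,\dots,a_n\}\}$; otherwise $\operatorname{run}(\mathbf a)=0$. $\mathsf{PF}_n$ is the set of $\mathbf a\in[n]^n$ with $|\{j:a_j\le i\}|\ge i$ for all $i\in[n]$ (parking functions). $\mathsf{RW}_n$ is the set of rook words: $\mathbf a\in[n]^n$ with $a_1\le\operatorname{run}(\mathbf a)$. *)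

(* Defs.v *)
From mathcomp Require Import all_boot all_order all_algebra.
Set Implicit Arguments. Unset Strict Implicit. Unset Printing Implicit Defensive.
Import GRing.Theory.

(* A word a = (a_1,...,a_n) in [n]^n is represented by a finite function
   a : {ffun 'I_n -> 'I_n.+1} all of whose values are >= 1;
   a_{j+1} is (val (a j)) for j : 'I_n (0-based positions). *)
Definition is_word (n : nat) (a : {ffun 'I_n -> 'I_n.+1}) : bool :=
  [forall j, 0 < (a j : nat)].

Definition occurs (n : nat) (a : {ffun 'I_n -> 'I_n.+1}) (k : nat) : bool :=
  [exists j, (a j : nat) == k].

Definition run (n : nat) (a : {ffun 'I_n -> 'I_n.+1}) : nat :=
  \max_(i < n.+1 | [forall k : 'I_n.+1, ((0 < (k : nat)) && (k <= i)) ==> occurs a k]) (i : nat).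

Definition is_parking (n : nat) (a : {ffun 'I_n -> 'I_n.+1}) : bool :=
  is_word a && [forall i : 'I_n.+1, (0 < (i : nat)) ==> (i <= #|[set j | (a j : nat) <= i]|)].

(* rook words: a_1 <= run(a); a_1 is the value at position 0
   (there is no such position when n = 0, so RW_0 is empty) *)
Definition is_rook_word (n : nat) (a : {ffun 'I_n -> 'I_n.+1}) : bool :=
  is_word a && [exists j : 'I_n, ((j : nat) == 0) && ((a j : nat) <= run a)].

Definition PF (n : nat) := [pred a : {ffun 'I_n -> 'I_n.+1} | is_parking a].
Definition RW (n : nat) := [pred a : {ffun 'I_n -> 'I_n.+1} | is_rook_word a].

(* Main.v *)
Require Import Defs.
From mathcomp Require Import all_boot all_order all_algebra.
Import GRing.Theory.
From mathcomp Require Import zify fingroup perm.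
Set Implicit Arguments. Unset Strict Implicit. Unset Printing Implicit Defensive.

Section Cycle.
Variables (N K : nat) (c : nat -> nat).
Hypothesis hc : \sum_(u < N) c u + K = N.

Definition cyc x := if x < N then x else x - N.
Definition S x := \sum_(u < x) c (cyc u).
Definition A x := S x + (2 * N - x).

Lemma S_rec x : S x.+1 = S x + c (cyc x).
Proof. by rewrite /S big_ord_recr. Qed.

Lemma A_rec x : x < 2 * N -> A x.+1 + 1 = A x + c (cyc x).
Proof. move=> h; rewrite /A S_rec; lia. Qed.

Lemma S_split x t : S (x + t) = S x + \sum_(w < t) c (cyc (x + w)).
Proof. by rewrite /S big_split_ord. Qed.

Lemma S_N : S N + K = N.
Proof.
rewrite /S; rewrite [X in X + K = _](_ : _ = \sum_(u < N) c u) ?hc //.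
by apply: eq_bigr => u _; rewrite /cyc ltn_ord.
Qed.

Lemma A_per x : x <= N -> A (N + x) + K = A x.
Proof.
move=> hx; rewrite /A S_split.
have -> : \sum_(w < x) c (cyc (N + w)) = S x.
  apply: eq_bigr => w _; rewrite /cyc; congr c.
  have hw : w < N by apply: leq_trans (ltn_ord w) hx.
  rewrite hw ifF; last by lia. lia.
have := S_N. lia.
Qed.

Fixpoint Mn x := match x with 0 => A 0 | x'.+1 => minn (Mn x') (A x'.+1) end.

Lemma Mn_le x y : x <= y -> Mn y <= A x.
Proof.
elim: y => [|y IH] hx /=; first by move: hx; rewrite leqn0 => /eqP ->.
rewrite leq_eqVlt in hx; case/orP: hx => [/eqP ->|hx]; first by rewrite geq_minr.
by rewrite (leq_trans (geq_minl _ _)) // IH.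
Qed.

Lemma Mn_ex y : exists2 x, x <= y & Mn y = A x.
Proof.
elim: y => [|y [x hx IH]] /=; first by exists 0.
rewrite /minn; case: ifP => _; first by exists x => //; exact: leqW.
by exists y.+1.
Qed.

Definition recb y := [forall x : 'I_y, A y < A x].

Lemma recE y : 0 < y <= 2 * N -> Mn y.-1 = Mn y + recb y.
Proof.
case: y => // y /= hy.
have hA := A_rec (x:=y) (ltac:(lia)).
have hm := Mn_le (leqnn y).
case: (Mn_ex y) => x hx ex.
case hr: (recb y.+1).
- have: A y.+1 < A (Ordinal (n:=y.+1) (ltac:(lia) : x < y.+1)).
    by move/forallP: (hr) => /(_ (Ordinal (n:=y.+1) (ltac:(lia) : x < y.+1))).
  rewrite /= -ex => hlt. rewrite /minn; case: ifP; lia.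
- have : ~~ (A y.+1 < Mn y).
    apply/negP => hlt; move/negbT: (hr); rewrite negb_forall => /existsP [z].
    by rewrite -leqNgt => hz; have := Mn_le (ltnSE (ltn_ord z)); lia.
  rewrite -leqNgt => hle; rewrite /minn; case: ifP; lia.
Qed.

Lemma tele j : j <= N -> \sum_(s < j) (recb (s + N).+1 : nat) + Mn (N + j) = Mn N.
Proof.
elim: j => [|j IH] hj; first by rewrite big_ord0 addn0.
rewrite big_ord_recr /= -IH; last by lia.
have := recE (y := (N + j).+1) (ltac:(lia)). rewrite -pred_Sn (addnC j N) addnS => ->. by rewrite -addnA (addnC _ (Mn _)).
Qed.

Lemma Mn_2N : Mn (N + N) + K = Mn N.
Proof.
case: (Mn_ex N) => x hx ex.
have h1 : Mn (N + N) <= A (N + x) by apply: Mn_le; lia.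
have h2 := A_per hx.
case: (Mn_ex (N + N)) => z hz ez.
case: (leqP z N) => hzN.
- have := Mn_le hzN; lia.
- have hz' : z - N <= N by lia.
  have := A_per hz'; rewrite subnKC; last by lia.
  have := Mn_le hz'. lia.
Qed.

Definition good (s : nat) :=
  (c s == 0) && [forall t : 'I_N.+1, t <= \sum_(w < t) c (cyc (s + w)) + K].

Lemma goodE s : s < N -> good s = recb (s + N).+1.
Proof.
move=> hs.
have cycsN : cyc (s + N) = s by rewrite /cyc ifF; lia.
have hA := A_rec (x := s + N) (ltac:(lia)). rewrite cycsN in hA.
have hP := A_per (x := s) (ltac:(lia)).
have key : forall t, t <= N ->
   (t <= \sum_(w < t) c (cyc (s + w)) + K) = (A (s + N) <= A (s + t)).
  move=> t ht. have := S_split s t. rewrite /A => e.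
  rewrite /A in hP; rewrite (addnC N s) in hP.
  apply/idP/idP; lia.
apply/idP/idP.
- case/andP => /eqP c0 /forallP H; apply/forallP => x.
  case: (leqP s x) => hsx.
  + have hx : x - s <= N by have := ltn_ord x; lia.
    have := H (Ordinal (ltac:(lia) : x - s < N.+1)).
    rewrite key //= subnKC //. lia.
  + have hx : x + N - s <= N by lia.
    have := H (Ordinal (ltac:(lia) : x + N - s < N.+1)).
    rewrite key //= subnKC; last by lia.
    have := A_per (x := x) (ltac:(lia)). rewrite (addnC N x). lia.
- move/forallP => H.
  have h1 := H (Ordinal (ltnSn (s + N))). rewrite /= in h1.
  apply/andP; split; first by apply/eqP; lia.
  apply/forallP => t; rewrite key; last by have := ltn_ord t; lia.
  have := H (Ordinal (ltac:(have := ltn_ord t; lia) : s + t < (s + N).+1)).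
  rewrite /=. lia.
Qed.

Lemma cycle_lemma : #|[pred s : 'I_N | good s]| = K.
Proof.
rewrite -sum1_card big_mkcond /=.
rewrite (eq_bigr (fun s : 'I_N => (recb (s + N).+1 : nat))); last first.
  by move=> s _; rewrite unfold_in /= goodE //; case: recb.
have h2 := tele (leqnn N). have h1 := Mn_2N. apply: (@addIn (Mn (N + N))). by rewrite h2 addnC h1.
Qed.

End Cycle.


Lemma card_sum (T : finType) (P : {pred T}) : #|P| = \sum_(a : T) (a \in P : nat).
Proof. by rewrite -sum1_card big_mkcond; apply: eq_bigr => a _; case: (a \in P). Qed.

Lemma sum_eq1 t w0 : \sum_(w < t) (w == w0 :> nat : nat) = (w0 < t).
Proof.
elim: t => [|t IH]; first by rewrite big_ord0.
rewrite big_ord_recr /= IH.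
case: (ltngtP w0 t) => h.
- by rewrite ltnS (ltnW h).
- by rewrite ltnNge h.
- by rewrite h ltnSn.
Qed.

Section W.
Variable n : nat.
Local Notation wT := {ffun 'I_n -> 'I_n.+1}.

Definition covers r (a : wT) := [forall k : 'I_n.+1, ((0 < (k : nat)) && (k <= r)) ==> occurs a k].
Definition Wd r (a : wT) := is_word a && covers r a.
Definition lowv r (v : 'I_n.+1) := (0 < (v : nat)) && (v <= r).
Definition mlow r (a : wT) := \sum_j (lowv r (a j) : nat).

Lemma covers_mono r s (a : wT) : r <= s -> covers s a -> covers r a.
Proof.
move=> hrs /forallP H; apply/forallP => k; apply/implyP => /andP [h1 h2].
by apply: (implyP (H k)); rewrite h1 (leq_trans h2 hrs).
Qed.

Lemma run_le (a : wT) : run a <= n.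
Proof. by apply/bigmax_leqP => i _; rewrite -ltnS. Qed.

Lemma run_ge r (a : wT) : r <= n -> (r <= run a) = covers r a.
Proof.
move=> hr; apply/idP/idP.
- have : 0 < #|[pred i : 'I_n.+1 | covers i a]|.
    apply/card_gt0P; exists ord0; rewrite unfold_in /=.
    by apply/forallP => k; rewrite andbC leqn0 andbC; case: (k : nat).
  move/eq_bigmax_cond => /(_ (fun i : 'I_n.+1 => (i : nat))) [i0].
  rewrite unfold_in /= => hi0; rewrite /run => ->.
  by move=> h; apply: covers_mono h hi0.
- move=> h; rewrite /run.
  exact: (@leq_bigmax_cond _ _ (fun i : 'I_n.+1 => (i : nat)) (Ordinal (hr : r < n.+1))).
Qed.

Lemma coversS r (a : wT) : r < n -> covers r.+1 a = covers r a && occurs a r.+1.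
Proof.
move=> hr; apply/idP/idP.
- move=> H; rewrite (covers_mono (leqnSn r) H) /=.
  by move/forallP: H => /(_ (Ordinal (hr : r.+1 < n.+1))) /= /implyP; apply.
- case/andP => /forallP H ho; apply/forallP => k; apply/implyP => /andP [h1 h2].
  move: h2; rewrite leq_eqVlt ltnS; case/orP => [/eqP ->|h2] //.
  by apply: (implyP (H k)); rewrite h1 h2.
Qed.

Lemma run_eq r (a : wT) : r < n -> (run a == r) = covers r a && ~~ occurs a r.+1.
Proof.
move=> hr.
have e1 := run_ge a (ltnW hr). have e2 := run_ge a hr.
have -> : (run a == r) = (r <= run a) && ~~ (r.+1 <= run a).
  by rewrite -ltnNge ltnS eqn_leq andbC.
rewrite e1 e2 coversS //. by case: (covers r a).
Qed.

Lemma card_rng lo hi : hi <= n -> \sum_(v : 'I_n.+1) ((lo < v) && (v <= hi) : nat) = hi - lo.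
Proof.
elim: hi => [|hi IH] hh.
  by rewrite big1 // => v _; lia.
rewrite (eq_bigr (fun v : 'I_n.+1 => ((lo < v) && (v <= hi) : nat) + ((lo <= hi) && (v == Ordinal (hh : hi.+1 < n.+1)) : nat))); last first.
  by move=> v _; rewrite -(inj_eq val_inj) /=; lia.
rewrite big_split /= IH; last by lia.
case: (leqP lo hi) => hl /=; last by rewrite big1 //; lia.
rewrite (eq_bigr (fun v => (v \in pred1 (Ordinal (hh : hi.+1 < n.+1)) : nat))) //.
rewrite -(card_sum (pred1 (Ordinal (hh : hi.+1 < n.+1)))) card1; lia.
Qed.

Lemma mlow_card r (a : wT) : mlow r a = #|[set j | lowv r (a j)]|.
Proof. by rewrite card_sum; apply: eq_bigr => j _; rewrite inE. Qed.

Lemma m_ge r (a : wT) : r <= n -> covers r a -> r <= mlow r a.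
Proof.
move=> hr /forallP H; rewrite mlow_card.
apply: leq_trans (leq_imset_card a _).
have hV : #|[set v : 'I_n.+1 | lowv r v]| = r.
  by rewrite card_sum -{2}(subn0 r) -(card_rng 0 hr); apply: eq_bigr => v _; rewrite inE.
rewrite -{1}hV.
apply: subset_leq_card; apply/subsetP => v; rewrite inE => hv.
have /existsP [j /eqP hj] := implyP (H v) hv.
have hj' : a j = v by apply: val_inj.
by apply/imsetP; exists j; rewrite // inE hj'.
Qed.
End W.

Section Sym.
Variable n : nat.
Local Notation wT := {ffun 'I_n -> 'I_n.+1}.

Lemma word_perm (s : {perm 'I_n}) r (a : wT) : Wd r [ffun i => a (s i)] = Wd r a.
Proof.
have ex : forall k : nat, occurs [ffun i => a (s i)] k = occurs a k.
  move=> k; apply/existsP/existsP => [[i]|[i hi]]; rewrite ?ffunE; first by exists (s i).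
  by exists (s^-1 i)%g; rewrite ffunE permKV.
rewrite /Wd /covers; congr andb.
  apply/forallP/forallP => H i; last by rewrite ffunE.
  by have := H (s^-1 i)%g; rewrite ffunE permKV.
by apply: eq_forallb => k; rewrite ex.
Qed.

Lemma pos_swap (j0 j : 'I_n) r :
  \sum_(a : wT) (Wd r a && lowv r (a j) : nat) = \sum_(a : wT) (Wd r a && lowv r (a j0) : nat).
Proof.
pose h := fun a : wT => [ffun i => a (tperm j0 j i)].
have hinj : injective h.
  move=> a b /ffunP e; apply/ffunP => x; have := e (tperm j0 j x).
  by rewrite !ffunE tpermK.
rewrite (reindex_inj hinj); apply: eq_bigr => a _.
by rewrite /h word_perm ffunE tpermR.
Qed.

Lemma tperm_eq (x y v k : 'I_n.+1) : (tperm x y v == k) = (v == tperm x y k).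
Proof. by rewrite -{1}(tpermK x y k) (inj_eq (@perm_inj _ (tperm x y))). Qed.

Lemma val_swap (j0 : 'I_n) s (x y : 'I_n.+1) :
  0 < (x : nat) -> 0 < (y : nat) -> (x <= s) = (y <= s) ->
  \sum_(a : wT) (Wd s a && (a j0 == x) : nat) = \sum_(a : wT) (Wd s a && (a j0 == y) : nat).
Proof.
move=> hx hy hxy.
pose h := fun a : wT => [ffun i => tperm x y (a i)].
have hinj : injective h.
  move=> a b /ffunP e; apply/ffunP => i; have := e i.
  by rewrite !ffunE => /perm_inj.
have pos : forall v : 'I_n.+1, (0 < (tperm x y v : nat)) = (0 < (v : nat)).
  by move=> v; case: tpermP => // ->; rewrite ?hx ?hy.
have rng : forall v : 'I_n.+1, ((0 < (tperm x y v : nat)) && (tperm x y v <= s)) = ((0 < (v:nat)) && (v <= s)).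
  by move=> v; rewrite pos; case: tpermP => // ->; rewrite ?hxy.
have occ : forall (a : wT) (k : 'I_n.+1), occurs (h a) k = occurs a (tperm x y k).
  move=> a k; apply/existsP/existsP => [[i hi]|[i hi]]; exists i; move: hi; rewrite ?ffunE !val_eqE //.
  - by rewrite tperm_eq.
  - by rewrite tperm_eq.
rewrite (reindex_inj hinj); apply: eq_bigr => a _.
have -> : (h a j0 == x) = (a j0 == y).
  by rewrite ffunE tperm_eq tpermL.
congr (nat_of_bool (_ && _)); rewrite /Wd /covers; congr andb.
  by apply: eq_forallb => i; rewrite ffunE pos.
apply/forallP/forallP => H k; apply/implyP => hk.
- have := implyP (H (tperm x y k)); rewrite rng hk occ tpermK; exact.
- by rewrite occ; apply: (implyP (H _)); rewrite rng.
Qed.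
End Sym.

Section Rot.
Variables n r : nat.
Hypothesis hr : r < n.
Local Notation wT := {ffun 'I_n -> 'I_n.+1}.
Local Notation N := (n - r).

Definition ridx u s := if s <= u then u - s else u + N - s.
Definition rotv s (v : 'I_n.+1) : 'I_n.+1 :=
  if r < v then inord (r.+1 + ridx (v - r.+1) s) else v.
Definition rot s (a : wT) : wT := [ffun j => rotv s (a j)].

Lemma rotv_val s (v : 'I_n.+1) : s < N ->
  (rotv s v : nat) = if r < v then r.+1 + ridx (v - r.+1) s else v.
Proof.
move=> hs; rewrite /rotv; case: ifP => // h; rewrite inordK //.
have := ltn_ord v; rewrite /ridx; case: ifP; lia.
Qed.

Lemma rotv_inj s : s < N -> injective (rotv s).
Proof.
move=> hs x y e; apply: val_inj; have := congr1 val e; rewrite /= !rotv_val //.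
have := ltn_ord x; have := ltn_ord y.
rewrite /ridx; repeat (case: ifP => ?); lia.
Qed.

Lemma rot_inj s : s < N -> injective (rot s).
Proof.
move=> hs a b /ffunP e; apply/ffunP => j; have := e j; rewrite !ffunE.
exact: rotv_inj.
Qed.

Lemma rotv_up s (v : 'I_n.+1) : s < N -> (r < rotv s v) = (r < v).
Proof. move=> hs; rewrite rotv_val //; case: ifP; lia. Qed.

Lemma rotv_low s (v : 'I_n.+1) : s < N -> ~~ (r < v) -> rotv s v = v.
Proof. by move=> hs h; rewrite /rotv ifF //; apply: negbTE. Qed.

Lemma occurs_rot s (a : wT) (k : nat) : s < N -> k <= r -> occurs (rot s a) k = occurs a k.
Proof.
move=> hs hk; apply/existsP/existsP => [[j hj]|[j hj]]; exists j; move: hj; rewrite ffunE.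
- case: (boolP (r < a j)) => h; last by rewrite rotv_low.
  by move=> /eqP e; have := rotv_up (a j) hs; rewrite e h; lia.
- move=> /eqP e; rewrite rotv_low ?e //; lia.
Qed.

Lemma Wd_rot s (a : wT) : s < N -> Wd r (rot s a) = Wd r a.
Proof.
move=> hs; rewrite /Wd /covers; congr andb.
  apply: eq_forallb => j; rewrite ffunE.
  case: (boolP (r < a j)) => h; last by rewrite rotv_low.
  have := rotv_up (a j) hs; rewrite h; lia.
apply: eq_forallb => k; case: (boolP ((0 < (k : nat)) && (k <= r))) => //= /andP [_ hk].
by rewrite occurs_rot.
Qed.

Lemma lowv_rot s (v : 'I_n.+1) : s < N -> lowv r (rotv s v) = lowv r v.
Proof.
move=> hs; rewrite /lowv; case: (boolP (r < v)) => h; last by rewrite rotv_low.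
have := rotv_up v hs; rewrite h; lia.
Qed.

Lemma mlow_rot s (a : wT) : s < N -> mlow r (rot s a) = mlow r a.
Proof. by move=> hs; apply: eq_bigr => j _; rewrite ffunE lowv_rot. Qed.

Definition cnt (a : wT) (x : nat) := \sum_j ((r < a j) && (a j - r.+1 == x) : nat).

Lemma upper_count s (a : wT) t : s < N -> t <= N ->
  \sum_j ((r < rot s a j) && (rot s a j <= r + t) : nat) = \sum_(w < t) cnt a (cyc N (s + w)).
Proof.
move=> hs ht; rewrite /cnt exchange_big /=; apply: eq_bigr => j _.
rewrite ffunE rotv_up //.
case: (boolP (r < a j)) => h /=; last by rewrite big1.
have hu : a j - r.+1 < N by have := ltn_ord (a j); lia.
rewrite (eq_bigr (fun w : 'I_t => (w == ridx (a j - r.+1) s :> nat : nat))); last first.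
  move=> w _; have := ltn_ord w.
  rewrite /cyc /ridx; repeat (case: ifP => ?); lia.
rewrite sum_eq1 rotv_val // h /ridx; case: ifP; lia.
Qed.

Lemma occ_r1 s (a : wT) : s < N -> occurs (rot s a) r.+1 = (cnt a s != 0).
Proof.
move=> hs; rewrite /cnt sum_nat_eq0 negb_forall; apply: eq_existsb => j.
rewrite ffunE.
rewrite (_ : (rotv s (a j) == r.+1 :> nat) = (r < a j) && (a j - r.+1 == s)).
  by case: (_ && _).
rewrite rotv_val //; have := ltn_ord (a j); rewrite /ridx; repeat (case: ifP => ?) => //=; lia.
Qed.
End Rot.

Section Count.
Variables n r : nat.
Hypothesis hr : r < n.
Local Notation wT := {ffun 'I_n -> 'I_n.+1}.
Local Notation N := (n - r).

Definition PFr (a : wT) := is_parking a && (run a == r).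

Lemma card_split (b : wT) t : is_word b ->
  #|[set j | (b j : nat) <= r + t]| = mlow r b + \sum_j ((r < b j) && (b j <= r + t) : nat).
Proof.
move=> /forallP hw; rewrite card_sum /mlow -big_split /=; apply: eq_bigr => j _.
rewrite inE /lowv; have := hw j; lia.
Qed.

Lemma PF_char (b : wT) : Wd r b ->
  PFr b = ~~ occurs b r.+1 && [forall t : 'I_N.+1, r + t <= #|[set j | (b j : nat) <= r + t]|].
Proof.
case/andP => hw hc; rewrite /PFr run_eq // hc /= /is_parking hw /= andbC; congr andb.
apply/forallP/forallP => H.
- move=> t; case: (posnP (r + t)) => [->|hp] //.
  have hi : r + t < n.+1 by have := ltn_ord t; lia.
  by have := implyP (H (Ordinal hi)); apply; rewrite /= hp.
- move=> i; apply/implyP => hi.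
  case: (leqP (i : nat) r) => hir.
  + have hci : covers i b := covers_mono hir hc.
    apply: (leq_trans (m_ge (ltnSE (ltn_ord i)) hci)); rewrite mlow_card.
    apply: subset_leq_card; apply/subsetP => j; rewrite !inE /lowv; case/andP => _ //.
  + have ht : i - r < N.+1 by have := ltn_ord i; lia.
    have := H (Ordinal ht); rewrite /= subnKC //; exact: ltnW.
Qed.

Lemma PF_rot_good s (a : wT) : s < N -> Wd r a ->
  PFr (rot r s a) = good N (mlow r a - r) (cnt r a) s.
Proof.
move=> hs hW.
have hm : r <= mlow r a by case/andP: hW => _ hc; exact: m_ge (ltnW hr) hc.
have hw : is_word (rot r s a) by have := Wd_rot hr a hs; rewrite hW => /andP [].
rewrite PF_char ?Wd_rot // /good occ_r1 // negbK; congr andb.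
apply: eq_forallb => t.
rewrite card_split // mlow_rot // upper_count //; last by have := ltn_ord t; lia.
apply/idP/idP; lia.
Qed.

Lemma sum_cnt (a : wT) : Wd r a -> \sum_(u < N) cnt r a u + (mlow r a - r) = N.
Proof.
case/andP => /forallP hw hc.
have hm : r <= mlow r a by exact: m_ge (ltnW hr) hc.
have -> : \sum_(u < N) cnt r a u = \sum_j ((r < a j) : nat).
  rewrite /cnt exchange_big /=; apply: eq_bigr => j _.
  case: (boolP (r < a j)) => h /=; last by rewrite big1.
  rewrite (eq_bigr (fun u : 'I_N => (u == a j - r.+1 :> nat : nat))); last by move=> u _; rewrite eq_sym.
  by rewrite sum_eq1; have := ltn_ord (a j); lia.
have : \sum_j ((r < a j) : nat) + mlow r a = n.
  rewrite /mlow -big_split /=.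
  rewrite (eq_bigr (fun _ => 1)); last by move=> j _; rewrite /lowv; have := hw j; lia.
  by rewrite big_const_ord iter_addn_0 mul1n.
have : mlow r a <= n by rewrite mlow_card; apply: leq_trans (max_card _) _; rewrite card_ord.
lia.
Qed.

Lemma count_a (a : wT) : Wd r a -> \sum_(s < N) (PFr (rot r s a) : nat) = mlow r a - r.
Proof.
move=> hW.
rewrite (eq_bigr (fun s : 'I_N => (s \in [pred s : 'I_N | good N (mlow r a - r) (cnt r a) s] : nat))).
  by rewrite -card_sum cycle_lemma // sum_cnt.
by move=> s _; rewrite inE /= PF_rot_good.
Qed.

Lemma PFr_Wd (a : wT) : PFr a -> Wd r a.
Proof.
case/andP => /andP [hw _] /eqP hrun; rewrite /Wd hw /= -run_ge ?hrun //; exact: ltnW.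
Qed.

Lemma PF_count : N * \sum_(a : wT) (PFr a : nat) = \sum_(a : wT) (Wd r a : nat) * (mlow r a - r).
Proof.
have -> : \sum_(a : wT) (Wd r a : nat) * (mlow r a - r) =
          \sum_(a : wT) \sum_(s < N) (PFr (rot r s a) : nat).
  apply: eq_bigr => a _; case: (boolP (Wd r a)) => h; first by rewrite mul1n count_a.
  rewrite mul0n big1 // => s _.
  case: (boolP (PFr (rot r s a))) => // /PFr_Wd; rewrite Wd_rot //; by rewrite (negbTE h).
rewrite exchange_big /=.
rewrite [RHS](eq_bigr (fun _ => \sum_(a : wT) (PFr a : nat))).
  by rewrite big_const_ord iter_addn_0 mulnC.
move=> s _; symmetry; exact: (reindex_inj (rot_inj hr (ltn_ord s))).
Qed.
End Count.

Lemma cov_card n i (b : {ffun 'I_n -> 'I_n.+1}) : i <= n -> covers i b -> i <= #|[set j | (b j : nat) <= i]|.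
Proof.
move=> hi hc; apply: (leq_trans (m_ge hi hc)); rewrite mlow_card.
by apply: subset_leq_card; apply/subsetP => j; rewrite !inE /lowv; case/andP => _ //.
Qed.

Lemma sum_mulK (I : finType) (f : I -> nat) K : \sum_i f i * K = (\sum_i f i) * K.
Proof. by rewrite bigop.big_distrl. Qed.

Section Final.
Variables n r : nat.
Variable j0 : 'I_n.
Hypothesis hj0 : (j0 : nat) = 0.
Local Notation wT := {ffun 'I_n -> 'I_n.+1}.
Local Notation N := (n - r).

Definition RWr (a : wT) := is_rook_word a && (run a == r).

Lemma rook_j0 (a : wT) : [exists j : 'I_n, ((j : nat) == 0) && ((a j : nat) <= run a)] = (a j0 <= run a).
Proof.
apply/existsP/idP => [[j /andP [/eqP hj h]]|h]; last by exists j0; rewrite hj0 eqxx.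
by have -> : j0 = j by apply: val_inj; rewrite /= hj0 hj.
Qed.

Lemma RW_char (a : wT) : r < n ->
  (RWr a : nat) + (Wd r.+1 a && lowv r (a j0) : nat) = (Wd r a && lowv r (a j0) : nat).
Proof.
move=> hr; rewrite /RWr /is_rook_word rook_j0 /Wd coversS // /lowv.
case: (eqVneq (run a) r) => [e|ne].
- have /andP [hc ho] : covers r a && ~~ occurs a r.+1 by rewrite -run_eq // e.
  rewrite e hc (negbTE ho) /=.
  case: (boolP (is_word a)) => hw //=.
  by move/forallP: hw => /(_ j0) ->; rewrite andbT addn0.
- rewrite andbF add0n.
  case: (boolP (is_word a)) => hw //=; case: (boolP (covers r a)) => hc //=.
  case: (boolP (occurs a r.+1)) => ho //=.
  by have := ne; rewrite -[run a != r]negbK run_eq // hc ho.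
Qed.

Lemma sum_by_val s (P : pred 'I_n.+1) :
  \sum_(a : wT) (Wd s a && P (a j0) : nat) =
  \sum_(v : 'I_n.+1) (P v : nat) * \sum_(a : wT) (Wd s a && (a j0 == v) : nat).
Proof.
under [RHS]eq_bigr do rewrite big_distrr.
rewrite [RHS]exchange_big /=; apply: eq_bigr => a _.
rewrite (bigD1 (a j0)) //= big1 ?addn0; first by rewrite eqxx andbT; case: (P _); case: (Wd s a).
by move=> v hv; rewrite eq_sym (negbTE hv) andbF muln0.
Qed.

Lemma r1_lt : r < n -> r.+1 < n.+1. Proof. by []. Qed.

Lemma per_r : r < n -> \sum_(a : wT) (PFr r a : nat) = \sum_(a : wT) (RWr a : nat).
Proof.
move=> hr.
pose r1 := Ordinal (r1_lt hr).
pose G := \sum_(a : wT) (Wd r a && lowv r (a j0) : nat).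
pose F := \sum_(a : wT) (Wd r a : nat).
pose H := \sum_(a : wT) (Wd r.+1 a && lowv r (a j0) : nat).
pose K := \sum_(a : wT) (Wd r.+1 a && (a j0 == r1) : nat).
pose P := \sum_(a : wT) (PFr r a : nat).
pose R := \sum_(a : wT) (RWr a : nat).
have E0 : N * P + r * F = n * G.
  rewrite PF_count // /F big_distrr -big_split /=.
  have <- : \sum_(a : wT) (Wd r a : nat) * mlow r a = n * G.
    have -> : n * G = \sum_(j < n) G by rewrite big_const_ord iter_addn_0 mulnC.
    rewrite (eq_bigr (fun j => \sum_(a : wT) (Wd r a && lowv r (a j) : nat))); last first.
      by move=> j _; rewrite /G (pos_swap j0 j).
    rewrite exchange_big /=; apply: eq_bigr => a _; rewrite big_distrr /=.
    by apply: eq_bigr => j _; case: (Wd r a); rewrite ?mul1n ?mul0n.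
  apply: eq_bigr => a _; case: (boolP (Wd r a)) => h; last by rewrite !muln0 mul0n.
  have := m_ge (ltnW hr) (proj2 (andP h)); rewrite !mul1n muln1; lia.
have E1 : R + H = G by rewrite /R /H /G -big_split /=; apply: eq_bigr => a _; rewrite RW_char.
have E2 : F = G + N * K.
  have -> : F = G + \sum_(a : wT) (Wd r a && (r < a j0) : nat).
    rewrite /F /G -big_split /=; apply: eq_bigr => a _.
    case: (boolP (Wd r a)) => //= /andP [hw _]; have := forallP hw j0; rewrite /lowv; lia.
  congr (_ + _); rewrite (sum_by_val r (fun v : 'I_n.+1 => r < v)).
  rewrite (eq_bigr (fun v : 'I_n.+1 => ((r < v) && (v <= n) : nat) * K)); last first.
    move=> v _; case: (boolP (r < v)) => hv; last by rewrite !mul0n.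
    have h1 : 0 < (v : nat) by apply: leq_ltn_trans hv.
    have h2 : 0 < (r1 : nat) by [].
    have h3 : ((v : nat) <= r) = ((r1 : nat) <= r) by rewrite /= ltnn leqNgt hv.
    rewrite (ltnSE (ltn_ord v)) !mul1n (@val_swap n j0 r v r1 h1 h2 h3).
    rewrite /K; apply: eq_bigr => a _; rewrite /Wd coversS //.
    case: (boolP (a j0 == r1)) => h; rewrite ?andbF //= !andbT.
    have -> : occurs a r.+1 by apply/existsP; exists j0; rewrite (eqP h).
    by rewrite andbT.
  by rewrite sum_mulK card_rng // mulnC.
have E3 : H = r * K.
  rewrite /H (sum_by_val r.+1 (lowv r)).
  rewrite (eq_bigr (fun v : 'I_n.+1 => ((0 < v) && (v <= r) : nat) * K)); last first.
    move=> v _; rewrite /lowv; case: (boolP ((0 < v) && (v <= r))) => hv; last by rewrite !mul0n.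
    case/andP: hv => h1 hv.
    have h2 : 0 < (r1 : nat) by [].
    have h3 : ((v : nat) <= r.+1) = ((r1 : nat) <= r.+1) by rewrite /= leqnn (leq_trans hv (leqnSn _)).
    by rewrite !mul1n (@val_swap n j0 r.+1 v r1 h1 h2 h3).
  by rewrite sum_mulK (card_rng 0 (ltnW hr)) subn0.
have hN : 0 < N by lia.
have E4 : N * (P + r * K) = N * G.
  have en : n * G = N * G + r * G by rewrite -mulnDl subnK // ltnW.
  rewrite mulnDr mulnCA; move: E0; rewrite E2 en mulnDr.
  move: (N * P) (r * G) (r * (N * K)) (N * G) => x1 x2 x3 x4; lia.
move/eqP: E4; rewrite eqn_pmul2l // => /eqP E4.
rewrite -/P -/R; move: E1 E4; rewrite E3; move: (r * K) => x; lia.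
Qed.

Lemma per_n : 0 < n -> \sum_(a : wT) (is_parking a && (run a == n) : nat) = \sum_(a : wT) (is_rook_word a && (run a == n) : nat).
Proof.
move=> hn; apply: eq_bigr => a _.
have e : (run a == n) = covers n a by rewrite eqn_leq run_le run_ge.
rewrite /is_rook_word rook_j0 e.
case: (boolP (covers n a)) => h; last by rewrite !andbF.
have ha : a j0 <= run a by move: (h); rewrite -e => /eqP ->; rewrite -ltnS ltn_ord.
rewrite ha !andbT /is_parking.
case: (boolP (is_word a)) => //= hw.
case: forallP => // H; exfalso; apply: H => i; apply/implyP => _.
apply: cov_card (ltnSE (ltn_ord i)) (covers_mono (ltnSE (ltn_ord i)) h).
Qed.
End Final.


Lemma sum_by_run n (P : {pred {ffun 'I_n -> 'I_n.+1}}) :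
  (\sum_(a in P) ('X ^+ run a : {poly int}) =
   \sum_(r < n.+1) (\sum_a ((a \in P) && (run a == r)) : nat)%:R * 'X ^+ r)%R.
Proof.
rewrite (partition_big (fun a => inord (run a) : 'I_n.+1) xpredT) //=.
apply: eq_bigr => r _.
rewrite (eq_bigr (fun _ => ('X ^+ r : {poly int})%R)) => [|a /andP [_ /eqP <-]]; last by rewrite inordK // ltnS run_le.
rewrite sumr_const mulr_natl; congr (_ *+ _)%R.
rewrite card_sum; apply: eq_bigr => a _; rewrite -topredE /= -val_eqE /= inordK // ltnS run_le //.
Qed.

Unset Implicit Arguments.
Local Open Scope ring_scope.

Theorem theorem4p11 (n : nat) : (0 < n)%N ->
  \sum_(a in PF n) ('X ^+ run a : {poly int})
  = \sum_(a in RW n) ('X ^+ run a : {poly int}).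
Proof.
move=> hn; rewrite !sum_by_run; apply: eq_bigr => r _; congr (_%:R * _).
case: n hn r => // n _ r.
have hj0 : ((ord0 : 'I_n.+1) : nat) = 0%N by [].
case: (ltnP r n.+1) => hr.
- have := per_r hj0 hr; rewrite /PFr /RWr => e.
  by rewrite (eq_bigr (fun a => (is_parking a && (run a == r) : nat))) ?e //.
- have er : (r : nat) = n.+1 by apply/eqP; rewrite eqn_leq hr -ltnS ltn_ord.
  rewrite (eq_bigr (fun a => (is_parking a && (run a == n.+1) : nat))); last by move=> a _; rewrite er.
  rewrite [RHS](eq_bigr (fun a => (is_rook_word a && (run a == n.+1) : nat))); last by move=> a _; rewrite er.
  exact: per_n hj0 (ltn0Sn n).
Qed.
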